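(* Let $S=(n,X,U,f,Y,h,x_0)$, $\widehat{S}=(\widehat{n},\widehat{X},\widehat{U},\widehat{f},\widehat{Y},\widehat{h},\widehat{x}_0)$ and $\widehat{\widehat{S}}=(\widehat{\widehat{n}},\widehat{\widehat{X}},\widehat{\widehat{U}},\widehat{\widehat{f}},\widehat{\widehat{Y}},\widehat{\widehat{h}},\widehat{\widehat{x}}_0)$ be deterministic multi-robot transition systems. If $\widehat{\widehat{S}}$ is an $(\widehat{n},\widehat{\tau})$-illusion of $\widehat{S}$, and $\widehat{S}$ is an $(m,\tau)$-illusion of $S$, then $\widehat{\widehat{S}}$ is an $(m,\tau\cdot\widehat{\tau})$-illusion of $S$.
   Context: A deterministic multi-robot transition system is a 7-tuple $(n,X,U,f,Y,h,x_0)$ where $n$ is a positive integer (the number of robots); $X=X^{(1)}\times\cdots\times X^{(n)}$ is the state space; $U=U^{(1)}\times\cdots\times U^{(n)}$ is the action space; $f:X\times U\to X$ is the transition function given by robot transition functions $f^{(i)}$ via $f(x,(u^{(1)},\dots,u^{(n)}))=(f^{(1)}(x,u^{(1)}),\dots,f^{(n)}(x,u^{(n)}))$; $Y=Y^{(1)}\times\cdots\times Y^{(n)}$ is the observation space; $h:X\to Y$ is given by robot observation functions via $h(x)=(h^{(1)}(x),\dots,h^{(n)}(x))$; and $x_0\in X$ is the initial state. The system evolves in discrete time by $x_{k+1}=f(x_k,u_k)$, $y_k=h(x_k)$. Superscripts in parentheses index robots, subscripts index time. When one system $\widehat{S}$ (the primary system; its quantities carry hats) is used to emulate another system $S$ (the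 secondary system), a robot policy $\widehat{\pi}^{(i)}$ for robot $i$ of $\widehat{S}$ is a function mapping robot $i$'s own action history $\widehat{u}^{(i)}_0,\dots,\widehat{u}^{(i)}_k$, its own observation history $\widehat{y}^{(i)}_0,\dots,\widehat{y}^{(i)}_k$, and the history $x_0,\dots,x_\ell$ of states of the secondary system (where $\ell$ may differ from $k$, as the two systems may run on different time scales) to an action $\widehat{u}^{(i)}_k\in\widehat{U}^{(i)}$. Robot policies in $S$ choose actions of $S$ from histories in the same manner. For systems $S=(n,X,U,f,Y,h,x_0)$ and $\widehat{S}=(\widehat{n},\widehat{X},\widehat{U},\widehat{f},\widehat{Y},\widehat{h},\widehat{x}_0)$ and an integer $0<m\le n$, $\widehat{S}$ is an $m$-illusion of $S$ if there exist (i) robot policies $\widehat{\pi}^{(1)},\dots,\widehat{\pi}^{(\widehat{n})}$ in $\widehat{S}$, (ii) a strictly increasing function $z:\mathbb{Z}^+\to\mathbb{Z}^+$, and (iii) an infinite sequence of functions $\rho_k:\{1,\dots,m\}\to\{1,\dots,\widehat{n}\}$, such that for any robot policies $\pi^{(1)},\dots,\pi^{(n)}$ in $S$, for all $k\ge 0$ and all $1\le i\le m$, $h^{(i)}(x_k)=\widehat{h}^{(\rho_k(i))}(\widehat{x}_{z(k)})$, where $x_k$ is the state trajectory of $S$ and $\widehat{x}$ that of $\widehat{S}$. The tuple $(\widehat{\pi},(\rho_1,\rho_2,\dots),z)$ is called a witness. If $\widehat{S}$ is an $m$-illusion of $S$ with a witness for which the sequence $z(2)-z(1),z(3)-z(2),z(4)-z(3),\dots$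 is bounded above by $\tau$, then it is an $(m,\tau)$-illusion; $\tau$ (an integer) is the slowdown. *)

(* Defs.v *)
From mathcomp Require Import all_boot.
Unset Strict Implicit. Unset Printing Implicit Defensive.

(* Robots are indexed by
   'I_n (paper robot i <-> ordinal i-1).  All observation spaces are taken
   inside one ambient type O (shared by the systems being compared), so that
   observations of different systems can be compared with "=". *)
Record mrts (O : Type) := MRTS {
  nrob : nat;
  nrob_gt0 : 0 < nrob;
  Xr : 'I_nrob -> Type;
  Ur : 'I_nrob -> Type;
  fr : forall i : 'I_nrob, (forall j, Xr j) -> Ur i -> Xr i;
  hr : 'I_nrob -> (forall j, Xr j) -> O;
  x0 : forall j, Xr j
}.
Arguments nrob {O}.
Arguments Xr {O} _ _.
Arguments Ur {O} _ _.
Arguments fr {O} _ _ _ _.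
Arguments hr {O} _ _ _.
Arguments x0 {O} _ _.

Section Defs.
Variable O : Type.

Definition state (S : mrts O) := forall j, Xr S j.
Definition action (S : mrts O) := forall j, Ur S j.

Definition step (S : mrts O) (x : state S) (u : action S) : state S :=
  fun i => fr S i x (u i).

(* A decision rule: given the time k, the state history x_0..x_k and the
   action history u_0..u_{k-1}, returns the joint action u_k. *)
Definition decision (S : mrts O) :=
  nat -> seq (state S) -> seq (action S) -> action S.

(* hist k = ([:: x_0; ..; x_k], [:: u_0; ..; u_{k-1}]) *)
Fixpoint hist (S : mrts O) (dec : decision S) (k : nat)
  : seq (state S) * seq (action S) :=
  match k with
  | 0 => ([:: x0 S], [::])
  | k'.+1 =>
      let: (xs, us) := hist S dec k' in
      let u := dec k' xs us in
      (rcons xs (step S (last (x0 S) xs) u), rcons us u)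
  end.

Definition traj (S : mrts O) (dec : decision S) (k : nat) : state S :=
  last (x0 S) (hist S dec k).1.

(* Robot policies of a system run on its own (secondary role):
   own action history, own observation history -> action. *)
Definition sec_policy (S : mrts O) :=
  forall i : 'I_(nrob S), seq (Ur S i) -> seq O -> Ur S i.

Definition sec_dec (S : mrts O) (pi : sec_policy S) : decision S :=
  fun _ xs us i => pi i [seq u i | u <- us] [seq hr S i x | x <- xs].

(* Robot policies of a primary system Sh emulating S:
   own action history, own observation history, history x_0..x_l of the
   secondary states -> action. *)
Definition prim_policy (S Sh : mrts O) :=
  forall i : 'I_(nrob Sh), seq (Ur Sh i) -> seq O -> seq (state S) -> Ur Sh i.

(* number of secondary steps k with z k <= j: at primary time j the primary
   knows the secondary states x_0 .. x_(ell z j) *)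
Definition ell (z : nat -> nat) (j : nat) : nat :=
  count (fun t => z t <= j) (iota 0 j.+1).

Definition prim_dec (S Sh : mrts O) (pih : prim_policy S Sh) (z : nat -> nat)
  (x : nat -> state S) : decision Sh :=
  fun j xs us i =>
    pih i [seq u i | u <- us] [seq hr Sh i y | y <- xs] (mkseq x (ell z j).+1).

Definition illusion (S Sh : mrts O) (m tau : nat) : Prop :=
  (0 < m <= nrob S) /\
  exists (pih : prim_policy S Sh) (rho : nat -> 'I_(nrob S) -> 'I_(nrob Sh))
         (z : nat -> nat),
    (forall k, z k < z k.+1) /\
    (forall k, 0 < k -> z k.+1 - z k <= tau) /\
    forall pi : sec_policy S,
      forall (k : nat) (i : 'I_(nrob S)), i < m ->
        hr S i (traj S (sec_dec S pi) k) =
        hr Sh (rho k i)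
          (traj Sh (prim_dec S Sh pih z (traj S (sec_dec S pi))) (z k)).

End Defs.
Arguments illusion {O} S Sh m tau.

(* Main.v *)
From Stdlib Require Import FunctionalExtensionality.
Require Import Defs.
From mathcomp Require Import all_boot.
From mathcomp Require Import zify.

Arguments state {O}. Arguments action {O}. Arguments step {O}.
Arguments decision {O}. Arguments hist {O}. Arguments traj {O}.
Arguments sec_policy {O}. Arguments sec_dec {O}. Arguments prim_policy {O}.
Arguments prim_dec {O}.

Lemma eq_in_mkseq' (T : Type) (f g : nat -> T) n :
  (forall t, t < n -> f t = g t) -> mkseq f n = mkseq g n.
Proof.
move=> H; apply/eq_in_map => t; rewrite mem_iota add0n => /andP[_ Ht].
exact: H.
Qed.

Lemma hist_size {O : Type} (S : mrts O) dec k : size (hist S dec k).2 = k.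
Proof.
elim: k => [|k IH] //=.
by case E: (hist S dec k) IH => [xs us] /= IH; rewrite size_rcons IH.
Qed.

Lemma hist_agree {O : Type} (S : mrts O) (d1 d2 : decision S) N :
  (forall j xs us, j < N -> size us = j -> d1 j xs us = d2 j xs us) ->
  forall t, t <= N -> hist S d1 t = hist S d2 t.
Proof.
move=> H; elim=> [|t IH] Ht //=.
rewrite IH; last by lia.
case E: (hist S d2 t) => [xs us].
have Hs : size us = t by have := hist_size S d2 t; rewrite E.
by rewrite H //; lia.
Qed.

Lemma inc_lt {f : nat -> nat} : (forall k, f k < f k.+1) ->
  forall a b, a < b -> f a < f b.
Proof.
move=> Hf a; elim=> [|b IH] Hab //.
have := Hf b; case: (ltngtP a b) => [/IH|//|->]; lia.
Qed.

Lemma inc_le {f : nat -> nat} : (forall k, f k < f k.+1) ->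
  forall a b, a <= b -> f a <= f b.
Proof.
move=> Hf a b; rewrite leq_eqVlt => /orP[/eqP->//|/(inc_lt Hf)]; lia.
Qed.

Lemma inc_ge {f : nat -> nat} : (forall k, f k < f k.+1) -> forall k, k <= f k.
Proof.
move=> Hf; elim=> [|k IH] //; have := Hf k; lia.
Qed.

Lemma count_prefix (P : pred nat) :
  (forall a b, a <= b -> P b -> P a) ->
  forall n k, (k < count P (iota 0 n)) = (k < n) && P k.
Proof.
move=> HP; elim=> [|n IH] k; first by rewrite /= ltn0.
have -> : iota 0 n.+1 = iota 0 n ++ [:: n] by rewrite -addn1 iotaD.
rewrite count_cat /= addn0.
have Hc : count P (iota 0 n) <= n by rewrite -[X in _ <= X](size_iota 0 n) count_size.
case Pn: (P n) => /=.
- have Ecn : count P (iota 0 n) = n.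
    apply/eqP; rewrite eqn_leq Hc /=.
    case: n IH Pn Hc => [//|n'] IH Pn Hc.
    by rewrite IH ltnSn (HP _ n'.+1).
  rewrite Ecn addn1 ltnS; case: (leqP k n) => Hk /=; last by [].
  by rewrite (HP _ n).
- rewrite addn0 IH; case: (ltngtP k n) => Hk //=.
  + by rewrite ltnS ltnW.
  + by rewrite ltnNge Hk.
  + by rewrite Hk Pn andbF.

Qed.

Lemma ell_lt {z : nat -> nat} : (forall k, z k < z k.+1) ->
  forall j k, (k < ell z j) = (z k <= j).
Proof.
move=> Hz j k; rewrite /ell count_prefix.
- case Hk: (z k <= j); last by rewrite andbF.
  by rewrite andbT; have := inc_ge Hz k; lia.
- move=> a b Hab Hb; have := inc_le Hz _ _ Hab; lia.
Qed.

Lemma zdiff {f : nat -> nat} tau : (forall k, f k < f k.+1) ->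
  (forall k, 0 < k -> f k.+1 - f k <= tau) ->
  forall a b, 0 < a -> a <= b -> f b - f a <= tau * (b - a).
Proof.
move=> Hf Ht a; elim=> [|b IH] Ha Hab; first by lia.
case: (ltngtP a b.+1) => Hb; last first.
- by rewrite Hb subnn.
- by lia.
- have := IH Ha (ltnSE Hb); have := Ht b (leq_trans Ha (ltnSE Hb)).
  have := Hf b; have := inc_le Hf _ _ (ltnSE Hb).
  rewrite (_ : b.+1 - a = (b - a).+1); last by lia.
  rewrite mulnS; lia.
Qed.

Theorem theorem2 (O : Type) (S Sh Shh : mrts O) (m tau tauh : nat) :
  illusion Sh Shh (nrob Sh) tauh ->
  illusion S Sh m tau ->
  illusion S Shh m (tau * tauh).
Proof.
move=> [_ [pihh [rhoh [zh [zhinc [zhtau Hh]]]]]]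
       [Hm [pih [rho [z [zinc [ztau H]]]]]].
split=> //.
pose pihh' : prim_policy S Shh := fun i us ys xs =>
  pihh i us ys (mkseq (traj Sh (prim_dec S Sh pih z
       (fun t => nth (x0 S) xs t))) (ell zh (size us)).+1).
have zzinc : forall k, zh (z k) < zh (z k.+1).
  by move=> k; apply: inc_lt => //.
exists pihh', (fun k i => rhoh (z k) (rho k i)), (fun k => zh (z k)).
split=> //; split.
  move=> k Hk.
  have Hzk : 0 < z k by have := inc_ge zinc k; lia.
  have := @zdiff zh tauh zhinc zhtau _ _ Hzk (ltnW (zinc k)).
  have := ztau k Hk.
  move=> H1 H2; apply: leq_trans H2 _.
  by rewrite mulnC; apply: leq_mul.
move=> pi k i Hi.
set x := traj S (sec_dec S pi).
pose pi' : sec_policy Sh := fun i us ys => pih i us ys (mkseq x (ell z (size us)).+1).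
have Ey : forall t, traj Sh (sec_dec Sh pi') t = traj Sh (prim_dec S Sh pih z x) t.
  move=> t; rewrite /traj; f_equal; f_equal; apply: (@hist_agree _ _ _ _ t); last done.
  move=> j xs us _ Hs; apply: functional_extensionality_dep => r.
  by rewrite /sec_dec /prim_dec /pi' size_map Hs.
rewrite (H pi k i Hi) -/x -Ey (Hh pi' (z k) (rho k i) (ltn_ord _)).
congr hr.
rewrite /traj; f_equal; f_equal; apply: (@hist_agree _ _ _ _ (zh (z k))); last done.
move=> j xs us _ Hs; apply: functional_extensionality_dep => r.
rewrite /prim_dec /pihh' size_map Hs.
congr pihh; apply: eq_in_mkseq' => t Ht.
rewrite -[LHS]/(traj Sh (sec_dec Sh pi') t) Ey /traj; f_equal; f_equal; apply: (@hist_agree _ _ _ _ (ell zh j)); last by lia.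
move=> j' xs' us' Hj' _; apply: functional_extensionality_dep => r'.
rewrite /prim_dec; congr pih; apply: eq_in_mkseq' => t' Ht'.
rewrite nth_mkseq //.
have key : ell z j' <= ell (fun k => zh (z k)) j.
  rewrite leqNgt; apply/negP => Hlt.
  set c := ell (fun k => zh (z k)) j in Hlt.
  have : c < c; last by rewrite ltnn.
  rewrite {2}/c (ell_lt zzinc).
  move: Hlt; rewrite (ell_lt zinc) => Hc.
  move: Hj'; rewrite (ell_lt zhinc) => Hj'.
  exact: leq_trans (inc_le zhinc _ _ Hc) Hj'.
lia.
Qed.
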